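(* Let $f:\mathbb{R}\to\mathbb{R}$ be twice continuously differentiable, and let $u_L<u_U$ with $f''>0$ on $(u_L,u_U)$ or $f''<0$ on $(u_L,u_U)$. Let $x_1<x_2=x_3<x_4$, set $x_{23}=x_2$, and let $u_1,u_2,u_3,u_4\in[u_L,u_U]$. Then there exists $u_{23}$ in the closed interval with endpoints $u_2$ and $u_3$ such that $$(x_{23}-x_1)\,a(u_1,u_{23})+(x_4-x_{23})\,a(u_{23},u_4)=(x_2-x_1)\,a(u_1,u_2)+(x_3-x_2)\,a(u_2,u_3)+(x_4-x_3)\,a(u_3,u_4),$$ where $a$ is the nonlinear average defined below (note the middle term on the right vanishes since $x_2=x_3$).
   Context: For $g:\mathbb{R}\to\mathbb{R}$ write $[g(u)]_{a}^{b}=g(b)-g(a)$. For $u_1\neq u_2$ the nonlinear average is $a(u_1,u_2)=\frac{[f'(u)u-f(u)]_{u_1}^{u_2}}{[f'(u)]_{u_1}^{u_2}}=\frac{\int_{u_1}^{u_2}f''(u)u\,\mathrm{d}u}{\int_{u_1}^{u_2}f''(u)\,\mathrm{d}u}$, and $a(u,u)=u$. *)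

(* Defs.v *)
From Stdlib Require Import Reals.
From Coquelicot Require Import Coquelicot.
Open Scope R_scope.

Definition bracket (g : R -> R) (a b : R) : R := g b - g a.

Definition nl_avg (f : R -> R) (u1 u2 : R) : R :=
  if Req_EM_T u1 u2 then u1
  else bracket (fun u => Derive f u * u - f u) u1 u2
       / bracket (Derive f) u1 u2.

(* Main.v *)
Require Import Defs.
From Stdlib Require Import Reals Lra Psatz.
From Coquelicot Require Import Coquelicot.
Open Scope R_scope.

Lemma div_ge_helper (N Dd c : R) : 0 < Dd -> c * Dd <= N -> c <= N / Dd.
Proof.
  intros HD H. apply Rmult_le_reg_r with Dd; auto.
  unfold Rdiv. rewrite Rmult_assoc, Rinv_l by lra. lra.
Qed.

Lemma div_le_helper (N Dd c : R) : 0 < Dd -> N <= c * Dd -> N / Dd <= c.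
Proof.
  intros HD H. apply Rmult_le_reg_r with Dd; auto.
  unfold Rdiv. rewrite Rmult_assoc, Rinv_l by lra. lra.
Qed.

Lemma mediant (q1 q2 D1 D2 : R) : 0 < D1 -> 0 < D2 -> q1 <= q2 ->
  q1 <= (q1 * D1 + q2 * D2) / (D1 + D2) <= q2.
Proof.
  intros H1 H2 H. split.
  - apply div_ge_helper; nra.
  - apply div_le_helper; nra.
Qed.

Lemma avg_sym (f : R -> R) (a b : R) : nl_avg f a b = nl_avg f b a.
Proof.
  unfold nl_avg, bracket.
  destruct (Req_EM_T a b); destruct (Req_EM_T b a); try (subst; reflexivity);
    try (exfalso; auto; fail).
  set (p := Derive f b * b - f b). set (q := Derive f a * a - f a).
  replace (Derive f a - Derive f b) with (- (Derive f b - Derive f a)) by ring.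
  unfold Rdiv. rewrite Rinv_opp. ring.
Qed.

Lemma avg_opp (f : R -> R) (a b : R) : nl_avg (fun x => - f x) a b = nl_avg f a b.
Proof.
  unfold nl_avg, bracket.
  destruct (Req_EM_T a b); [reflexivity|].
  rewrite !Derive_opp.
  replace (- Derive f b - - Derive f a) with (- (Derive f b - Derive f a)) by ring.
  unfold Rdiv. rewrite Rinv_opp. ring.
Qed.

Definition cl (m M t : R) := Rmin M (Rmax m t).

Lemma cl_range m M t : m <= M -> m <= cl m M t <= M.
Proof. intros. unfold cl, Rmin, Rmax. repeat destruct Rle_dec; lra. Qed.

Lemma cl_id m M t : m <= t <= M -> cl m M t = t.
Proof. intros. unfold cl, Rmin, Rmax. repeat destruct Rle_dec; lra. Qed.

Lemma cl_lip m M t s : m <= M -> Rabs (cl m M t - cl m M s) <= Rabs (t - s).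
Proof.
  intros. unfold cl, Rmin, Rmax. repeat destruct Rle_dec;
  unfold Rabs; repeat destruct Rcase_abs; lra.
Qed.

Lemma cl_cont m M t : m <= M -> continuity_pt (cl m M) t.
Proof.
  intros Hm. unfold continuity_pt, continue_in, limit1_in, limit_in.
  intros eps Heps. exists eps. split; [lra|].
  intros x [_ Hx]. simpl in *. unfold R_dist in *.
  eapply Rle_lt_trans; [apply cl_lip; auto| exact Hx].
Qed.

Section Convex.
Variable f : R -> R.
Variables uL uU : R.
Hypothesis Hf : forall x, ex_derive f x.
Hypothesis HD : forall x, ex_derive (Derive f) x.
Hypothesis Hpos : forall u, uL < u < uU -> Derive (Derive f) u > 0.

Lemma D_incr x y : uL <= x -> x < y -> y <= uU -> Derive f x < Derive f y.
Proof.
  intros H1 H2 H3.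
  destruct (MVT_cor2 (Derive f) (Derive (Derive f)) x y H2) as [c [Hc Hr]].
  { intros c _. apply is_derive_Reals. apply Derive_correct. apply HD. }
  assert (Derive (Derive f) c > 0) by (apply Hpos; lra).
  assert (0 < Derive (Derive f) c * (y - x)) by (apply Rmult_lt_0_compat; lra).
  lra.
Qed.

Lemma tangent w v : uL <= w <= uU -> uL <= v <= uU -> w <> v ->
  f v - f w - Derive f w * (v - w) > 0.
Proof.
  intros Hw Hv Hne.
  assert (Hd : forall c, derivable_pt_lim f c (Derive f c)).
  { intros c. apply is_derive_Reals. apply Derive_correct. apply Hf. }
  destruct (Rlt_or_le w v) as [Hlt|Hle].
  - destruct (MVT_cor2 f (Derive f) w v Hlt (fun c _ => Hd c)) as [c [Hc Hr]].
    assert (Derive f w < Derive f c) by (apply D_incr; lra).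
    rewrite Hc. nra.
  - assert (Hlt : v < w) by lra.
    destruct (MVT_cor2 f (Derive f) v w Hlt (fun c _ => Hd c)) as [c [Hc Hr]].
    assert (Derive f c < Derive f w) by (apply D_incr; lra).
    nra.
Qed.

Lemma avg_eq w v : w <> v -> nl_avg f w v =
  ((Derive f v * v - f v) - (Derive f w * w - f w)) / (Derive f v - Derive f w).
Proof.
  intros H. unfold nl_avg, bracket. destruct Req_EM_T; [contradiction|reflexivity].
Qed.

Lemma avg_diag w : nl_avg f w w = w.
Proof. unfold nl_avg. destruct Req_EM_T; [reflexivity|contradiction]. Qed.

Lemma between w v : uL <= w -> w < v -> v <= uU -> w <= nl_avg f w v <= v.
Proof.
  intros H1 H2 H3. rewrite avg_eq by lra.
  assert (HDd : Derive f w < Derive f v) by (apply D_incr; lra).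
  assert (T1 := tangent w v ltac:(lra) ltac:(lra) ltac:(lra)).
  assert (T2 := tangent v w ltac:(lra) ltac:(lra) ltac:(lra)).
  split.
  - apply div_ge_helper; [lra|]. nra.
  - apply div_le_helper; [lra|]. nra.
Qed.

Lemma avg_close w v : uL <= w <= uU -> uL <= v <= uU ->
  Rabs (nl_avg f w v - w) <= Rabs (v - w).
Proof.
  intros Hw Hv. destruct (Rtotal_order w v) as [H|[H|H]].
  - assert (B := between w v ltac:(lra) H ltac:(lra)).
    unfold Rabs; repeat destruct Rcase_abs; lra.
  - subst. rewrite avg_diag. unfold Rminus. rewrite Rplus_opp_r. lra.
  - rewrite avg_sym. assert (B := between v w ltac:(lra) H ltac:(lra)).
    unfold Rabs; repeat destruct Rcase_abs; lra.
Qed.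

Lemma med3 w v v' : uL <= w -> w < v -> v < v' -> v' <= uU ->
  nl_avg f w v <= nl_avg f w v' <= nl_avg f v v'.
Proof.
  intros H1 H2 H3 H4.
  assert (B1 := between w v ltac:(lra) H2 ltac:(lra)).
  assert (B2 := between v v' ltac:(lra) H3 ltac:(lra)).
  assert (E1 := avg_eq w v ltac:(lra)).
  assert (E2 := avg_eq v v' ltac:(lra)).
  assert (HD1 : Derive f w < Derive f v) by (apply D_incr; lra).
  assert (HD2 : Derive f v < Derive f v') by (apply D_incr; lra).
  assert (M := mediant (nl_avg f w v) (nl_avg f v v') (Derive f v - Derive f w)
     (Derive f v' - Derive f v) ltac:(lra) ltac:(lra) ltac:(lra)).
  replace (nl_avg f w v') with
    ((nl_avg f w v * (Derive f v - Derive f w) + nl_avg f v v' * (Derive f v' - Derive f v)) /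
     ((Derive f v - Derive f w) + (Derive f v' - Derive f v))); [exact M|].
  rewrite (avg_eq w v') by lra. rewrite E1, E2. field. lra.
Qed.

Lemma mono w v v' : uL <= w <= uU -> uL <= v -> v <= v' -> v' <= uU ->
  nl_avg f w v <= nl_avg f w v'.
Proof.
  intros Hw H1 H2 H3.
  destruct (Req_dec v v') as [E|Hne]; [subst; lra|].
  assert (Hlt : v < v') by lra.
  destruct (Rtotal_order w v) as [Hwv|[Hwv|Hwv]].
  - apply (med3 w v v'); lra.
  - subst. rewrite avg_diag. apply (between v v'); lra.
  - destruct (Rtotal_order w v') as [Hwv'|[Hwv'|Hwv']].
    + rewrite avg_sym. apply Rle_trans with w.
      * apply (between v w); lra.
      * apply (between w v'); lra.
    + subst. rewrite avg_diag, avg_sym. apply (between v v'); lra.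
    + rewrite (avg_sym f w v), (avg_sym f w v'). apply (med3 v v' w); lra.
Qed.

Lemma avg_cont w v0 : uL <= w <= uU -> uL <= v0 <= uU -> w <> v0 ->
  continuity_pt (nl_avg f w) v0.
Proof.
  intros Hw Hv Hne. apply continuity_pt_filterlim.
  assert (HDne : Derive f v0 - Derive f w <> 0).
  { destruct (Rtotal_order w v0) as [H|[H|H]].
    - assert (Derive f w < Derive f v0) by (apply D_incr; lra). lra.
    - contradiction.
    - assert (Derive f v0 < Derive f w) by (apply D_incr; lra). lra. }
  change (continuous (nl_avg f w) v0).
  apply (continuous_ext_loc (nl_avg f w) (fun v =>
    ((Derive f v * v - f v) - (Derive f w * w - f w)) / (Derive f v - Derive f w))).
  - assert (Hp : 0 < Rabs (v0 - w)) by (apply Rabs_pos_lt; lra).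
    exists (mkposreal _ Hp). intros y Hy.
    rewrite avg_eq; [reflexivity|].
    intros E. subst y. unfold ball in Hy. simpl in Hy.
    unfold AbsRing_ball, abs, minus, plus, opp in Hy. simpl in Hy.
    rewrite <- Rabs_Ropp in Hy.
    replace (- (w + - v0)) with (v0 - w) in Hy by ring. lra.
  - apply (@ex_derive_continuous R_AbsRing R_NormedModule). auto_derive. repeat split; auto.
Qed.

Lemma k_cont m M w t : uL <= m -> m <= M -> M <= uU -> uL <= w <= uU ->
  continuity_pt (fun t => nl_avg f w (cl m M t)) t.
Proof.
  intros H1 H2 H3 Hw.
  assert (R0 := cl_range m M t H2).
  destruct (Req_dec (cl m M t) w) as [E|Hne].
  - unfold continuity_pt, continue_in, limit1_in, limit_in.
    intros eps Heps. exists eps. split; [lra|].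
    intros x [_ Hx]. simpl in *. unfold R_dist in *.
    rewrite E, avg_diag.
    assert (R1 := cl_range m M x H2).
    eapply Rle_lt_trans; [apply avg_close; lra|].
    rewrite <- E. eapply Rle_lt_trans; [apply cl_lip; auto| exact Hx].
  - apply (continuity_pt_comp (cl m M) (nl_avg f w)).
    + apply cl_cont; auto.
    + apply avg_cont; lra.
Qed.

Lemma main_convex x1 x2 x4 u1 u2 u3 u4 : x1 < x2 -> x2 < x4 ->
  uL <= u1 <= uU -> uL <= u2 <= uU -> uL <= u3 <= uU -> uL <= u4 <= uU ->
  exists u23, Rmin u2 u3 <= u23 <= Rmax u2 u3 /\
   (x2 - x1) * nl_avg f u1 u23 + (x4 - x2) * nl_avg f u23 u4
   = (x2 - x1) * nl_avg f u1 u2 + (x4 - x2) * nl_avg f u3 u4.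
Proof.
  intros Hx1 Hx2 H1 H2 H3 H4.
  set (m := Rmin u2 u3). set (M := Rmax u2 u3).
  assert (Hm : uL <= m) by (unfold m, Rmin; destruct Rle_dec; lra).
  assert (HM : M <= uU) by (unfold M, Rmax; destruct Rle_dec; lra).
  assert (HmM : m <= M) by (unfold m, M, Rmin, Rmax; destruct Rle_dec; lra).
  assert (Hu2 : m <= u2 <= M) by (unfold m, M, Rmin, Rmax; destruct Rle_dec; lra).
  assert (Hu3 : m <= u3 <= M) by (unfold m, M, Rmin, Rmax; destruct Rle_dec; lra).
  set (A := x2 - x1). set (B := x4 - x2).
  set (h := fun t => A * nl_avg f u1 (cl m M t) + B * nl_avg f u4 (cl m M t)).
  assert (Hc : continuity h).
  { intros t. unfold h.
    apply (continuity_pt_plus (fun t => A * nl_avg f u1 (cl m M t))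
                              (fun t => B * nl_avg f u4 (cl m M t))).
    - apply (continuity_pt_mult (fun _ => A) (fun t => nl_avg f u1 (cl m M t))).
      + apply continuity_pt_const. intros a b; reflexivity.
      + apply k_cont; lra.
    - apply (continuity_pt_mult (fun _ => B) (fun t => nl_avg f u4 (cl m M t))).
      + apply continuity_pt_const. intros a b; reflexivity.
      + apply k_cont; lra. }
  set (T := A * nl_avg f u1 u2 + B * nl_avg f u4 u3).
  assert (HT : Rmin (h u2) (h u3) <= T <= Rmax (h u2) (h u3)).
  { unfold h. rewrite !cl_id by lra.
    assert (HA : 0 <= A) by (unfold A; lra). assert (HB : 0 <= B) by (unfold B; lra).
    destruct (Rle_lt_dec u2 u3) as [Hle|Hlt].
    - assert (a1 := mono u1 u2 u3 ltac:(lra) ltac:(lra) Hle ltac:(lra)).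
      assert (a2 := mono u4 u2 u3 ltac:(lra) ltac:(lra) Hle ltac:(lra)).
      split.
      + eapply Rle_trans; [apply Rmin_l|]. unfold T.
        apply Rplus_le_compat_l. apply Rmult_le_compat_l; auto.
      + eapply Rle_trans; [|apply Rmax_r]. unfold T.
        apply Rplus_le_compat_r. apply Rmult_le_compat_l; auto.
    - assert (a1 := mono u1 u3 u2 ltac:(lra) ltac:(lra) ltac:(lra) ltac:(lra)).
      assert (a2 := mono u4 u3 u2 ltac:(lra) ltac:(lra) ltac:(lra) ltac:(lra)).
      split.
      + eapply Rle_trans; [apply Rmin_r|]. unfold T.
        apply Rplus_le_compat_r. apply Rmult_le_compat_l; auto.
      + eapply Rle_trans; [|apply Rmax_l]. unfold T.
        apply Rplus_le_compat_l. apply Rmult_le_compat_l; auto. }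
  destruct (IVT_gen h u2 u3 T Hc HT) as [x [Hx Hhx]].
  exists x. split; [exact Hx|].
  unfold h in Hhx. rewrite cl_id in Hhx by (unfold m, M; lra).
  rewrite (avg_sym f x u4), (avg_sym f u3 u4). exact Hhx.
Qed.

End Convex.

Theorem lemma3 (f : R -> R) (uL uU x1 x2 x3 x4 u1 u2 u3 u4 : R) :
  (* f is twice continuously differentiable on R *)
  (forall x, ex_derive f x) ->
  (forall x, ex_derive (Derive f) x) ->
  (forall x, continuous (Derive_n f 2) x) ->
  uL < uU ->
  ((forall u, uL < u < uU -> Derive_n f 2 u > 0) \/
   (forall u, uL < u < uU -> Derive_n f 2 u < 0)) ->
  x1 < x2 -> x2 = x3 -> x3 < x4 ->
  uL <= u1 <= uU -> uL <= u2 <= uU -> uL <= u3 <= uU -> uL <= u4 <= uU ->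
  let x23 := x2 in
  exists u23, Rmin u2 u3 <= u23 <= Rmax u2 u3 /\
    (x23 - x1) * nl_avg f u1 u23 + (x4 - x23) * nl_avg f u23 u4
    = (x2 - x1) * nl_avg f u1 u2 + (x3 - x2) * nl_avg f u2 u3
      + (x4 - x3) * nl_avg f u3 u4.
Proof.
  intros Hf HD _ HLU Hsign H12 E H34 H1 H2 H3 H4 x23. subst x3. unfold x23.
  destruct Hsign as [Hp|Hn].
  - destruct (main_convex f uL uU Hf HD Hp x1 x2 x4 u1 u2 u3 u4) as [u [Hu Heq]];
      try lra.
    exists u. split; [exact Hu|]. rewrite Heq. ring.
  - set (g := fun x => - f x).
    assert (Hg : forall x, ex_derive g x) by (intros; apply (@ex_derive_opp R_AbsRing R_NormedModule f); auto).
    assert (HDg : forall x, Derive g x = - Derive f x) by (intros; apply Derive_opp).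
    assert (HDDg : forall x, ex_derive (Derive g) x).
    { intros x. apply (ex_derive_ext (fun y => - Derive f y)).
      - intros; symmetry; apply HDg.
      - apply (@ex_derive_opp R_AbsRing R_NormedModule (Derive f)); auto. }
    assert (Hpg : forall u, uL < u < uU -> Derive (Derive g) u > 0).
    { intros u Hu. rewrite (Derive_ext (Derive g) (fun y => - Derive f y)) by (intros; apply HDg).
      rewrite Derive_opp. specialize (Hn u Hu). change (Derive (Derive f) u < 0) in Hn. lra. }
    destruct (main_convex g uL uU Hg HDDg Hpg x1 x2 x4 u1 u2 u3 u4) as [u [Hu Heq]];
      try lra.
    exists u. split; [exact Hu|]. unfold g in Heq. rewrite !avg_opp in Heq.
    rewrite Heq. ring.
Qed.
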